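(* Let $(V,E)$ be a finite graph and $p\in[0,1]$. Define rates on $\{0,1\}^E\times\{-1,1\}^V$ as follows: (a) if $\sigma'=\sigma$ and there is $e\in E$ with $\eta'=\eta^e$ and $\gamma_\eta(e)=1$, then $c((\eta,\sigma),(\eta',\sigma'))=\big((1-p)\mathbf 1_{\eta(e)=1}+p\mathbf 1_{\eta(e)=0}\big)\mathbf 1_{(\eta,\sigma)\in\mathcal C}$; (b) if $\sigma'=\sigma$ and there is $e\in E$ with $\eta'=\eta^e$, $\gamma_\eta(e)=0$ and $\delta_\sigma(e)=1$, then $c((\eta,\sigma),(\eta',\sigma'))=\frac12\big((1-p)\mathbf 1_{\eta(e)=1}+p\mathbf 1_{\eta(e)=0}\big)\mathbf 1_{(\eta,\sigma)\in\mathcal C}$; (c) if there are $x\in V$ and $e\in E_x$ with $\eta'=\eta^e$, $\gamma_\eta(e)=0$, $\eta(e)=\delta_\sigma(e)$, and $\sigma'(y)=-\sigma(y)$ for the vertices $y$ connected to $x$ by an open path of $\eta$ not using $e$ (including $y=x$), $\sigma'(y)=\sigma(y)$ otherwise, then $c((\eta,\sigma),(\eta',\sigma'))=\frac14\big((1-p)\mathbf 1_{\eta(e)=1}\mathbf 1_{(\eta,\sigma)\in\mathcal C}+p\mathbf 1_{\eta(e)=0}\mathbf 1_{(\eta',\sigma')\in\mathcal C}\big)$; (d) all other off-diagonal rates are $0$, and diagonal rates are minus the sum of off-diagonal rates of the row. Then these rates satisfy the detailed balance equation $IP(\eta,\sigma)c((\eta,\sigma),(\eta',\sigma'))=IP(\eta',\sigma')c((\eta',\sigma'),(\eta,\sigma))$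 for all pairs of states.
   Context: Edge configurations $\eta\in\{0,1\}^E$ (1 = open), spin configurations $\sigma\in\{-1,1\}^V$. For $e=\langle x,y\rangle$, $\delta_\sigma(e)=\mathbf 1_{\sigma(x)=\sigma(y)}$. $\mathcal C=\{(\eta,\sigma):\eta(e)\le\delta_\sigma(e)\ \forall e\in E\}$. $IP(\eta,\sigma)=\frac1Z\prod_{e\in E}\big(p\mathbf 1_{\eta(e)=1}\delta_\sigma(e)+(1-p)\mathbf 1_{\eta(e)=0}\big)$ with $Z$ the normalizing constant. $E_x$ is the set of edges with endvertex $x$; $\eta^e$ is $\eta$ with the value at $e$ changed. For $e=\langle x,y\rangle$, $\gamma_\eta(e)=1$ if $x,y$ are connected by a path of open edges of $\eta$ not using $e$, and $0$ otherwise. *)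

(* Defs.v *)
From mathcomp Require Import all_boot all_order all_algebra.
Set Implicit Arguments. Unset Strict Implicit. Unset Printing Implicit Defensive.
Import Order.TTheory GRing.Theory Num.Theory.
Local Open Scope ring_scope.

Section FKG.
Variables (R : realFieldType) (V E : finType) (src tgt : E -> V) (p : R).

(* edge configurations eta : E -> bool (true = open);
   spin configurations sigma : V -> bool (true = +1, false = -1) *)
Definition state := ({ffun E -> bool} * {ffun V -> bool})%type.

Definition delta (sigma : {ffun V -> bool}) (e : E) : bool :=
  sigma (src e) == sigma (tgt e).

Definition eflip (eta : {ffun E -> bool}) (e : E) : {ffun E -> bool} :=
  [ffun f => if f == e then ~~ eta f else eta f].

Definition open_adj (eta : {ffun E -> bool}) (e : E) : rel V :=
  fun u v => [exists f, [&& f != e, eta f &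
     ((src f == u) && (tgt f == v)) || ((src f == v) && (tgt f == u))]].

Definition conn_wo (eta : {ffun E -> bool}) (e : E) (u v : V) : bool :=
  connect (open_adj eta e) u v.

Definition gamma (eta : {ffun E -> bool}) (e : E) : bool :=
  conn_wo eta e (src e) (tgt e).

Definition inC (s : state) : bool := [forall e, s.1 e ==> delta s.2 e].

Definition cflip (eta : {ffun E -> bool}) (e : E) (x : V)
  (sigma : {ffun V -> bool}) : {ffun V -> bool} :=
  [ffun y => if conn_wo eta e x y then ~~ sigma y else sigma y].

Definition b2r (b : bool) : R := if b then 1 else 0.

Definition weight (s : state) : R :=
  \prod_(e : E) (p * b2r (s.1 e) * b2r (delta s.2 e) + (1 - p) * b2r (~~ s.1 e)).
Definition Zpart : R := \sum_(s : state) weight s.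
Definition IP (s : state) : R := weight s / Zpart.

(* rate of an off-diagonal transition through the (unique) edge e with eta' = eta^e *)
Definition edge_rate (s s' : state) (e : E) : R :=
  let: (eta, sigma) := s in let: (eta', sigma') := s' in
  let A := (1 - p) * b2r (eta e) + p * b2r (~~ eta e) in
  if sigma' == sigma then
    (if gamma eta e then A * b2r (inC s)
     else if delta sigma e then (1 / 2) * A * b2r (inC s)
     else 0)
  else if [&& ~~ gamma eta e, eta e == delta sigma e &
            [exists x, ((src e == x) || (tgt e == x)) &&
                       (sigma' == cflip eta e x sigma)]] then
    (1 / 4) * ((1 - p) * b2r (eta e) * b2r (inC s)
               + p * b2r (~~ eta e) * b2r (inC s'))
  else 0.

Definition offrate (s s' : state) : R :=
  match [pick e | s'.1 == eflip s.1 e] with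
  | Some e => edge_rate s s' e
  | None => 0
  end.

Definition rate (s s' : state) : R :=
  if s == s' then - \sum_(t : state | t != s) offrate s t else offrate s s'.

End FKG.

(* Main.v *)
Require Import Defs.
From mathcomp Require Import all_boot all_order all_algebra.
From mathcomp Require Import ring.
Import Order.TTheory GRing.Theory Num.Theory.
Local Open Scope ring_scope.

Module Helpers.
Set Implicit Arguments. Unset Strict Implicit. Unset Printing Implicit Defensive.

Section S.
Variables (R : realFieldType) (V E : finType) (src tgt : E -> V).
Implicit Types (eta : {ffun E -> bool}) (sigma : {ffun V -> bool}) (e f : E) (x u v : V).

Lemma eflip_e eta e : eflip eta e e = ~~ eta e.
Proof. by rewrite /eflip ffunE eqxx. Qed.

Lemma eflip_ne eta e f : f != e -> eflip eta e f = eta f.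
Proof. by move=> h; rewrite /eflip ffunE (negbTE h). Qed.

Lemma eflipK eta e : eflip (eflip eta e) e = eta.
Proof. by apply/ffunP=> f; rewrite /eflip !ffunE; case: eqP => // ->; rewrite negbK. Qed.

Lemma open_adj_flip eta e u v :
  open_adj src tgt (eflip eta e) e u v = open_adj src tgt eta e u v.
Proof.
rewrite /open_adj; apply: eq_existsb => f.
by case: (boolP (f != e)) => //= h; rewrite eflip_ne.
Qed.

Lemma conn_wo_flip eta e : conn_wo src tgt (eflip eta e) e =2 conn_wo src tgt eta e.
Proof. move=> u v; rewrite /conn_wo; apply: eq_connect => x y; exact: open_adj_flip. Qed.

Lemma gamma_flip eta e : gamma src tgt (eflip eta e) e = gamma src tgt eta e.
Proof. exact: conn_wo_flip. Qed.

Lemma open_adj_sym eta e : symmetric (open_adj src tgt eta e).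
Proof.
move=> u v; rewrite /open_adj; apply: eq_existsb => f.
by rewrite orbC.
Qed.

Lemma conn_wo_sym eta e u v : conn_wo src tgt eta e u v = conn_wo src tgt eta e v u.
Proof. by rewrite /conn_wo (sym_connect_sym (@open_adj_sym eta e)). Qed.

Lemma connect_inv (T : finType) (r : rel T) (U : eqType) (g : T -> U) :
  (forall a b, r a b -> g a = g b) -> forall a b, connect r a b -> g a = g b.
Proof.
move=> H a b /connectP [q]; elim: q a => [|w q IH] a /=; first by move=> _ ->.
by case/andP=> ruw pq lv; rewrite (H _ _ ruw); exact: IH.
Qed.

Definition inC' (eta : {ffun E -> bool}) (sigma : {ffun V -> bool}) e :=
  [forall f, (f != e) ==> (eta f ==> delta src tgt sigma f)].

Lemma inC_split eta sigma e :
  inC src tgt (eta, sigma) = (eta e ==> delta src tgt sigma e) && inC' eta sigma e.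
Proof.
apply/idP/idP.
  move=> /forallP H; apply/andP; split; first exact: H.
  by apply/forallP=> f; apply/implyP=> _; apply: H.
case/andP=> h1 /forallP h2; apply/forallP=> f.
case: (eqVneq f e) => [->//|ne]; exact: (implyP (h2 f) ne).
Qed.

Lemma inC'_flip eta sigma e : inC' (eflip eta e) sigma e = inC' eta sigma e.
Proof.
apply: eq_forallb => f; case: (boolP (f != e)) => //= h; by rewrite eflip_ne.
Qed.

Lemma inC'_adj eta sigma e u v :
  inC' eta sigma e -> open_adj src tgt eta e u v -> sigma u = sigma v.
Proof.
move=> /forallP H /existsP [f /and3P [ne ef o]].
have := implyP (implyP (H f) ne) ef; rewrite /delta => /eqP.
by case/orP: o => /andP [/eqP -> /eqP ->].
Qed.

Lemma inC'_conn eta sigma e u v :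
  inC' eta sigma e -> conn_wo src tgt eta e u v -> sigma u = sigma v.
Proof. move=> H; apply: connect_inv => x y; exact: inC'_adj. Qed.

Lemma gamma_delta eta sigma e :
  inC' eta sigma e -> gamma src tgt eta e -> delta src tgt sigma e.
Proof. by move=> H g; rewrite /delta (inC'_conn H g). Qed.

Lemma cflipK eta e x sigma : cflip src tgt eta e x (cflip src tgt eta e x sigma) = sigma.
Proof. apply/ffunP=> y; rewrite /cflip !ffunE. by case: (conn_wo src tgt eta e x y); rewrite ?negbK. Qed.

Lemma cflip_delta_ne eta e x sigma f : f != e -> eta f ->
  delta src tgt (cflip src tgt eta e x sigma) f = delta src tgt sigma f.
Proof.
move=> ne ef.
have adj : open_adj src tgt eta e (src f) (tgt f).
  by apply/existsP; exists f; rewrite ne ef !eqxx.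
have : conn_wo src tgt eta e x (src f) = conn_wo src tgt eta e x (tgt f).
  apply/idP/idP => h; apply: connect_trans h _; apply: connect1 => //.
  by rewrite open_adj_sym.
rewrite /delta !ffunE => ->; case: ifP => //= _.
by case: (sigma (src f)); case: (sigma (tgt f)).
Qed.

Lemma cflip_delta_e eta e x sigma : ~~ gamma src tgt eta e -> (src e == x) || (tgt e == x) ->
  delta src tgt (cflip src tgt eta e x sigma) e = ~~ delta src tgt sigma e.
Proof.
rewrite /gamma => g /orP [] /eqP <-; rewrite /delta !ffunE /conn_wo connect0 -/(conn_wo _ _ _ _ _ _).
  by rewrite (negbTE g); case: (sigma (src e)); case: (sigma (tgt e)).
by rewrite conn_wo_sym (negbTE g); case: (sigma (src e)); case: (sigma (tgt e)).
Qed.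


Lemma cflip_flip eta e x sigma :
  cflip src tgt (eflip eta e) e x sigma = cflip src tgt eta e x sigma.
Proof. by apply/ffunP=> y; rewrite !ffunE conn_wo_flip. Qed.

Definition Ccond eta sigma sigma' e :=
  [&& ~~ gamma src tgt eta e, eta e == delta src tgt sigma e &
     [exists x, ((src e == x) || (tgt e == x)) &&
                (sigma' == cflip src tgt eta e x sigma)]].

Lemma Ccond_sym eta sigma sigma' e :
  Ccond eta sigma sigma' e -> Ccond (eflip eta e) sigma' sigma e.
Proof.
case/and3P=> g ad /existsP [x /andP [hx /eqP s']].
apply/and3P; split; first by rewrite gamma_flip.
  by rewrite eflip_e s' cflip_delta_e // (eqP ad).
by apply/existsP; exists x; rewrite hx cflip_flip s' cflipK eqxx.
Qed.

Variable p : R.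

Definition fac (a d : bool) : R := p * b2r R a * b2r R d + (1 - p) * b2r R (~~ a).

Lemma main eta sigma sigma' e :
  weight src tgt p (eta, sigma) * edge_rate src tgt p (eta, sigma) (eflip eta e, sigma') e =
  weight src tgt p (eflip eta e, sigma') * edge_rate src tgt p (eflip eta e, sigma') (eta, sigma) e.
Proof.
rewrite /weight (bigD1 e) //= [X in _ = X * _](bigD1 e) //=.
rewrite /edge_rate /= eflip_e gamma_flip.
case: (eqVneq sigma' sigma) => [->|ne].
  have -> : \prod_(i | i != e) (p * b2r R (eflip eta e i) * b2r R (delta src tgt sigma i) +
              (1 - p) * b2r R (~~ eflip eta e i)) =
            \prod_(i | i != e) (p * b2r R (eta i) * b2r R (delta src tgt sigma i) +
              (1 - p) * b2r R (~~ eta i)).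
    by apply: eq_bigr => i ne; rewrite eflip_ne.
  rewrite !(inC_split _ _ e) inC'_flip eflip_e.
  have gd := @gamma_delta eta sigma e.
  move: gd; case: (gamma src tgt eta e) => gd.
    case: (eta e) (delta src tgt sigma e) (inC' eta sigma e) gd => [] [] [] //= gd;
      rewrite /b2r /=; try ring.
    - by have := gd isT isT.
    - by have := gd isT isT.
  case: (eta e) (delta src tgt sigma e) (inC' eta sigma e) => [] [] [] //=;
      rewrite /b2r /=; ring.
case: (boolP (Ccond eta sigma sigma' e)) => C1.
  have C2 := Ccond_sym C1.
  move: C1 C2; rewrite /Ccond eflip_e gamma_flip => C1 C2; rewrite C1 C2.
  case/and3P: C1 => g /eqP ad /existsP [x /andP [hx /eqP s']].
  have -> : \prod_(i | i != e) (p * b2r R (eflip eta e i) * b2r R (delta src tgt sigma' i) +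
              (1 - p) * b2r R (~~ eflip eta e i)) =
            \prod_(i | i != e) (p * b2r R (eta i) * b2r R (delta src tgt sigma i) +
              (1 - p) * b2r R (~~ eta i)).
    apply: eq_bigr => i ni; rewrite eflip_ne //.
    case: (boolP (eta i)) => ei; first by rewrite s' cflip_delta_ne.
    by rewrite /b2r /= !(mulr0, mul0r).
  rewrite s' cflip_delta_e // -ad.
  case: (eta e) (inC src tgt (eta, sigma)) (inC src tgt (eflip eta e, cflip src tgt eta e x sigma))
    => [] [] [] /=; rewrite /b2r /=; ring.
have C2 : ~~ Ccond (eflip eta e) sigma' sigma e.
  by apply: contra C1 => /Ccond_sym; rewrite eflipK.
move: C1 C2; rewrite /Ccond eflip_e gamma_flip => C1 C2.
by rewrite (negbTE C1) (negbTE C2) !mulr0.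
Qed.

End S.
End Helpers.

Theorem proposition7 (R : realFieldType) (V E : finType) (src tgt : E -> V)
  (no_loop : forall e, src e != tgt e)
  (no_multi : forall e f,
     ((src e == src f) && (tgt e == tgt f)) || ((src e == tgt f) && (tgt e == src f)) ->
     e = f)
  (p : R) (hp : 0 <= p <= 1) :
  forall s s' : state V E,
    IP src tgt p s * rate src tgt p s s' = IP src tgt p s' * rate src tgt p s' s.
Proof.
move=> s s'; rewrite /rate.
case: (eqVneq s s') => [->//|ne].
rewrite /offrate.
have -> : [pick e | s.1 == eflip s'.1 e] = [pick e | s'.1 == eflip s.1 e].
  apply: eq_pick => e /=; apply/eqP/eqP => ->; by rewrite Helpers.eflipK.
case: pickP => [e /eqP H|_]; last by rewrite !mulr0.
case: s H {ne} => eta sigma; case: s' => eta' sigma' /= ->.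
by rewrite /IP mulrAC [RHS]mulrAC Helpers.main.
Qed.
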